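(* Let $G$ be a word-hyperbolic group with a marked finite generating set $A$, let $H\le G$ be a quasiconvex subgroup, and let $Y=\Gamma(G/H,A)$ with its simplicial metric $d_Y$. Then there exists $\delta'\ge 0$ such that every geodesic bigon in $(Y,d_Y)$ is $\delta'$-thin, i.e. whenever $\alpha,\beta$ are geodesic segments in $Y$ with the same endpoints, $\alpha$ lies in the closed $\delta'$-neighborhood of $\beta$ and $\beta$ lies in the closed $\delta'$-neighborhood of $\alpha$.
   Context: A marked finite generating set of $G$ is a map $\pi:A\to G$ from a finite alphabet $A$ such that $\pi(A)$ generates $G$ (non-injective $\pi$ and $1\in\pi(A)$ allowed). The relative Cayley graph $\Gamma(G/H,A)$ has vertex set the right cosets $Hg$ ($g\in G$) and, for each $(Hg,a)\in G/H\times A$, an edge from $Hg$ to $Hg\pi(a)$ labeled $a$; all edges have length one. $H$ quasiconvex means there is $C>0$ such that every geodesic in the Cayley graph $\Gamma(G,A)$ with endpoints in $H$ lies in the $C$-neighborhood of $H$. *)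

(* Defs.v *)
From Stdlib Require Import Reals Lra List ClassicalEpsilon ClassicalDescription.
Open Scope R_scope.

Record Group := {
  gcar :> Type;
  gmul : gcar -> gcar -> gcar;
  gone : gcar;
  ginv : gcar -> gcar;
  gmulA : forall x y z, gmul x (gmul y z) = gmul (gmul x y) z;
  gmul1 : forall x, gmul gone x = x;
  gmulV : forall x, gmul (ginv x) x = gone }.

Arguments gmul {g}. Arguments gone {g}. Arguments ginv {g}.

Definition is_subgroup (G : Group) (H : G -> Prop) : Prop :=
  H gone /\ (forall x y, H x -> H y -> H (gmul x y)) /\ (forall x, H x -> H (ginv x)).

Definition finite_type (A : Type) : Prop := exists l : list A, forall a, In a l.

(* a letter (a, true) stands for pi a, (a, false) for (pi a)^-1 *)
Definition word (A : Type) := list (A * bool).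

Definition letter_val {G : Group} {A : Type} (pi : A -> G) (l : A * bool) : G :=
  if snd l then pi (fst l) else ginv (pi (fst l)).

Definition eval {G : Group} {A : Type} (pi : A -> G) (w : word A) : G :=
  fold_right (fun l acc => gmul (letter_val pi l) acc) gone w.

Definition generates {G : Group} {A : Type} (pi : A -> G) : Prop :=
  forall g : G, exists w : word A, eval pi w = g.

(* least natural number satisfying P (meaningful when P is inhabited) *)
Definition least (P : nat -> Prop) : nat :=
  epsilon (inhabits 0%nat) (fun n => P n /\ forall m, P m -> (n <= m)%nat).

Definition wdist {G : Group} {A : Type} (pi : A -> G) (x y : G) : nat :=
  least (fun n => exists w : word A, length w = n /\ gmul x (eval pi w) = y).

Definition gromov_prod {G : Group} {A : Type} (pi : A -> G) (x y w : G) : R :=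
  (INR (wdist pi x w) + INR (wdist pi y w) - INR (wdist pi x y)) / 2.

Definition word_hyperbolic {G : Group} {A : Type} (pi : A -> G) : Prop :=
  exists delta : R, forall x y z w : G,
    gromov_prod pi x y w >= Rmin (gromov_prod pi x z w) (gromov_prod pi z y w) - delta.

Definition quasiconvex {G : Group} {A : Type} (pi : A -> G) (H : G -> Prop) : Prop :=
  exists C : R, C > 0 /\
    forall (h1 h2 : G) (w : word A), H h1 -> H h2 ->
      gmul h1 (eval pi w) = h2 -> length w = wdist pi h1 h2 ->
      forall i : nat, (i <= length w)%nat ->
        exists h : G, H h /\ INR (wdist pi (gmul h1 (eval pi (firstn i w))) h) <= C.

(* Points of Y: a vertex Hg (represented by g), or an interior point at
   parameter t in (0,1) of the edge (Hg, a) from Hg to Hg pi(a). *)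
Inductive YPt (G : Group) (A : Type) : Type :=
  | YV : G -> YPt G A
  | YE : G -> A -> {t : R | 0 < t < 1} -> YPt G A.
Arguments YV {G A}. Arguments YE {G A}.

Definition same_coset {G : Group} (H : G -> Prop) (x y : G) : Prop := H (gmul x (ginv y)).

Definition vdistY {G : Group} {A : Type} (pi : A -> G) (H : G -> Prop) (x y : G) : nat :=
  least (fun n => exists w : word A, length w = n /\ same_coset H (gmul x (eval pi w)) y).

(* the two endpoints of the (closed) cell containing a point, with the
   distance from the point to each of them *)
Definition ends {G : Group} {A : Type} (pi : A -> G) (p : YPt G A) : (G * R) * (G * R) :=
  match p with
  | YV g => ((g, 0), (g, 0))
  | YE g a t => ((g, proj1_sig t), (gmul g (pi a), 1 - proj1_sig t))
  end.

Definition route {G : Group} {A : Type} (pi : A -> G) (H : G -> Prop)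
  (e f : G * R) : R := snd e + INR (vdistY pi H (fst e) (fst f)) + snd f.

(* length of the shortest path leaving the cell of p through a vertex *)
Definition vertex_route {G : Group} {A : Type} (pi : A -> G) (H : G -> Prop)
  (p q : YPt G A) : R :=
  let (e1, e2) := ends pi p in
  let (f1, f2) := ends pi q in
  Rmin (Rmin (route pi H e1 f1) (route pi H e1 f2))
       (Rmin (route pi H e2 f1) (route pi H e2 f2)).

Definition same_edge {G : Group} {A : Type} (H : G -> Prop) (p q : YPt G A) : Prop :=
  match p, q with
  | YE g a _, YE g' a' _ => a = a' /\ same_coset H g g'
  | _, _ => False
  end.

Definition param {G : Group} {A : Type} (p : YPt G A) : R :=
  match p with YE _ _ t => proj1_sig t | YV _ => 0 end.

Definition dY {G : Group} {A : Type} (pi : A -> G) (H : G -> Prop) (p q : YPt G A) : R :=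
  if excluded_middle_informative (same_edge H p q)
  then Rmin (vertex_route pi H p q) (Rabs (param p - param q))
  else vertex_route pi H p q.

Definition geodesic_segment {G : Group} {A : Type} (pi : A -> G) (H : G -> Prop)
  (gam : R -> YPt G A) (L : R) : Prop :=
  0 <= L /\ forall s t, 0 <= s <= L -> 0 <= t <= L ->
    dY pi H (gam s) (gam t) = Rabs (s - t).

Definition in_nbhd {G : Group} {A : Type} (pi : A -> G) (H : G -> Prop)
  (delta : R) (alpha : R -> YPt G A) (L : R) (beta : R -> YPt G A) (M : R) : Prop :=
  forall s, 0 <= s <= L -> exists t, 0 <= t <= M /\ dY pi H (alpha s) (beta t) <= delta.

(* Main.v *)
Require Import Defs.
From Stdlib Require Import Reals Lra Lia List ClassicalEpsilon ClassicalDescription Classical.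
Open Scope R_scope.

Section Grp.
Variable G : Group.
Lemma gmulrV (x : G) : gmul x (ginv x) = gone.
Proof.
  rewrite <- (gmul1 _ (gmul x (ginv x))).
  rewrite <- (gmulV _ (ginv x)) at 1.
  rewrite <- gmulA. rewrite (gmulA _ (ginv x) x (ginv x)).
  rewrite gmulV, gmul1. apply gmulV.
Qed.
Lemma gmul1r (x : G) : gmul x gone = x.
Proof. rewrite <- (gmulV _ x), gmulA, gmulrV. apply gmul1. Qed.
Lemma gcancel (k x y : G) : gmul k x = gmul k y -> x = y.
Proof. intro E. rewrite <- (gmul1 _ x), <- (gmul1 _ y), <- (gmulV _ k), <- !gmulA, E. reflexivity. Qed.
Lemma ginv_mul (x y : G) : ginv (gmul x y) = gmul (ginv y) (ginv x).
Proof.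
  apply (gcancel (gmul x y)). rewrite gmulrV, <- gmulA, (gmulA _ y), gmulrV, gmul1, gmulrV. reflexivity.
Qed.
Lemma ginv_inv (x : G) : ginv (ginv x) = x.
Proof. apply (gcancel (ginv x)). rewrite gmulrV, gmulV. reflexivity. Qed.
End Grp.

Lemma least_ex (P : nat -> Prop) : (exists n, P n) -> exists n, P n /\ forall m, P m -> (n <= m)%nat.
Proof.
  intros [n Hn]. apply NNPP; intro C.
  assert (A: forall k, forall j, (j <= k)%nat -> ~ P j).
  { induction k; intros j Hj Pj.
    - apply C. exists j. split; auto. intros m _. lia.
    - destruct (Nat.eq_dec j (S k)).
      + subst. apply C. exists (S k). split; auto. intros m Pm.
        destruct (Nat.le_gt_cases (S k) m); auto. exfalso. apply (IHk m); [lia|auto].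
      + apply (IHk j); [lia|auto]. }
  apply (A n n); auto.
Qed.

Lemma least_spec (P : nat -> Prop) : (exists n, P n) -> P (least P) /\ forall m, P m -> (least P <= m)%nat.
Proof.
  intro E. unfold least. apply (epsilon_spec (inhabits 0%nat) (fun n => P n /\ forall m, P m -> (n <= m)%nat)).
  apply least_ex; auto.
Qed.

Section W.
Variables (G : Group) (A : Type) (pi : A -> G).

Lemma eval_app (u v : word A) : eval pi (u ++ v) = gmul (eval pi u) (eval pi v).
Proof.
  induction u as [|l u IH]; simpl.
  - rewrite gmul1. reflexivity.
  - rewrite IH, gmulA. reflexivity.
Qed.

Definition winv (w : word A) : word A := rev (map (fun l => (fst l, negb (snd l))) w).

Lemma eval_winv (w : word A) : eval pi (winv w) = ginv (eval pi w).
Proof.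
  unfold winv. induction w as [|l w IH]; simpl.
  - apply (gcancel G gone). rewrite gmulrV, gmul1. reflexivity.
  - rewrite eval_app, IH, ginv_mul. f_equal. simpl. rewrite gmul1r.
    unfold letter_val; destruct l as [a b]; destruct b; simpl; auto. rewrite ginv_inv; auto.
Qed.

Lemma length_winv (w : word A) : length (winv w) = length w.
Proof. unfold winv. rewrite length_rev, length_map. reflexivity. Qed.

Hypothesis hgen : generates pi.

Lemma wdist_ex (x y : G) : exists n, exists w : word A, length w = n /\ gmul x (eval pi w) = y.
Proof.
  destruct (hgen (gmul (ginv x) y)) as [w Hw]. exists (length w), w. split; auto.
  rewrite Hw, gmulA, gmulrV, gmul1. reflexivity.
Qed.

Lemma wdist_spec (x y : G) : exists w : word A, length w = wdist pi x y /\ gmul x (eval pi w) = y.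
Proof. apply (least_spec _ (wdist_ex x y)). Qed.

Lemma wdist_le (x y : G) (w : word A) : gmul x (eval pi w) = y -> (wdist pi x y <= length w)%nat.
Proof. intro E. apply (least_spec _ (wdist_ex x y)). exists w; auto. Qed.

Lemma wdist_refl (x : G) : wdist pi x x = 0%nat.
Proof. assert (H := wdist_le x x nil). simpl in H. rewrite gmul1r in H. specialize (H eq_refl). lia. Qed.

Lemma wdist_sym_le (x y : G) : (wdist pi y x <= wdist pi x y)%nat.
Proof.
  destruct (wdist_spec x y) as [w [L E]]. rewrite <- L, <- (length_winv w).
  apply wdist_le. rewrite eval_winv, <- E, <- gmulA, gmulrV, gmul1r. reflexivity.
Qed.

Lemma wdist_sym (x y : G) : wdist pi x y = wdist pi y x.
Proof. apply Nat.le_antisymm; apply wdist_sym_le. Qed.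

Lemma wdist_tri (x y z : G) : (wdist pi x z <= wdist pi x y + wdist pi y z)%nat.
Proof.
  destruct (wdist_spec x y) as [u [Lu Eu]]. destruct (wdist_spec y z) as [v [Lv Ev]].
  rewrite <- Lu, <- Lv, <- length_app. apply wdist_le. rewrite eval_app, gmulA, Eu, Ev. reflexivity.
Qed.

Lemma wdist_inv_le (k x y : G) : (wdist pi (gmul k x) (gmul k y) <= wdist pi x y)%nat.
Proof.
  destruct (wdist_spec x y) as [u [Lu Eu]]. rewrite <- Lu. apply wdist_le. rewrite <- gmulA, Eu. reflexivity.
Qed.

Lemma wdist_inv (k x y : G) : wdist pi (gmul k x) (gmul k y) = wdist pi x y.
Proof.
  apply Nat.le_antisymm. apply wdist_inv_le.
  assert (H := wdist_inv_le (ginv k) (gmul k x) (gmul k y)). rewrite !gmulA, gmulV, !gmul1 in H. exact H.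
Qed.

Lemma geod_prefix (x y : G) (w : word A) (i : nat) :
  length w = wdist pi x y -> gmul x (eval pi w) = y -> (i <= length w)%nat ->
  wdist pi x (gmul x (eval pi (firstn i w))) = i /\
  wdist pi (gmul x (eval pi (firstn i w))) y = (length w - i)%nat.
Proof.
  intros L E Hi.
  assert (A1 := wdist_le x (gmul x (eval pi (firstn i w))) (firstn i w) eq_refl).
  assert (A2 := wdist_le (gmul x (eval pi (firstn i w))) y (skipn i w)).
  rewrite <- gmulA, <- eval_app, firstn_skipn in A2. specialize (A2 E).
  rewrite length_firstn in A1. rewrite length_skipn in A2.
  assert (T := wdist_tri x (gmul x (eval pi (firstn i w))) y). lia.
Qed.
End W.

Section V.
Variables (G : Group) (A : Type) (pi : A -> G) (H : G -> Prop).
Hypothesis hgen : generates pi.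
Hypothesis hH : is_subgroup G H.

Lemma H1 : H gone. Proof. apply hH. Qed.
Lemma Hmul x y : H x -> H y -> H (gmul x y). Proof. apply hH. Qed.
Lemma Hinv x : H x -> H (ginv x). Proof. apply hH. Qed.

Lemma vdist_ex (x y : G) : exists n, exists w : word A, length w = n /\ same_coset H (gmul x (eval pi w)) y.
Proof.
  destruct (wdist_spec G A pi hgen x y) as [w [L E]]. exists (length w), w. split; auto.
  rewrite E. unfold same_coset. rewrite gmulrV. apply H1.
Qed.

Lemma vdist_le (x y k : G) : H k -> (vdistY pi H x y <= wdist pi x (gmul k y))%nat.
Proof.
  intro Hk. destruct (wdist_spec G A pi hgen x (gmul k y)) as [w [L E]]. rewrite <- L.
  apply (least_spec _ (vdist_ex x y)). exists w. split; auto. rewrite E. unfold same_coset.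
  rewrite <- gmulA, gmulrV, gmul1r. exact Hk.
Qed.

Lemma vdist_att (x y : G) : exists k, H k /\ wdist pi x (gmul k y) = vdistY pi H x y.
Proof.
  destruct (least_spec _ (vdist_ex x y)) as [[w [L E]] _].
  exists (gmul (gmul x (eval pi w)) (ginv y)). split; auto.
  apply Nat.le_antisymm.
  - fold (vdistY pi H x y) in L. rewrite <- L. apply (wdist_le G A pi hgen).
    rewrite <- gmulA, gmulV, gmul1r. reflexivity.
  - apply vdist_le. exact E.
Qed.

Lemma vdist_sym_le (x y : G) : (vdistY pi H y x <= vdistY pi H x y)%nat.
Proof.
  destruct (vdist_att x y) as [k [Hk E]]. rewrite <- E.
  rewrite (wdist_sym G A pi hgen).
  rewrite <- (wdist_inv G A pi hgen (ginv k)). rewrite gmulA, gmulV, gmul1.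
  apply vdist_le. apply Hinv; auto.
Qed.
Lemma vdist_sym (x y : G) : vdistY pi H x y = vdistY pi H y x.
Proof. apply Nat.le_antisymm; apply vdist_sym_le. Qed.

Lemma vdist_tri (x y z : G) : (vdistY pi H x z <= vdistY pi H x y + vdistY pi H y z)%nat.
Proof.
  destruct (vdist_att x y) as [k1 [Hk1 E1]]. destruct (vdist_att y z) as [k2 [Hk2 E2]].
  rewrite <- E1, <- E2. rewrite <- (wdist_inv G A pi hgen k1 y).
  eapply Nat.le_trans. apply (vdist_le x z (gmul k1 k2)). apply Hmul; auto.
  rewrite <- gmulA. apply (wdist_tri G A pi hgen).
Qed.

Lemma vdist_le_w (x y : G) : (vdistY pi H x y <= wdist pi x y)%nat.
Proof. assert (E := vdist_le x y gone H1). rewrite gmul1 in E. exact E. Qed.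

Lemma vdist_Hl (k x y : G) : H k -> vdistY pi H (gmul k x) y = vdistY pi H x y.
Proof.
  intro Hk. apply Nat.le_antisymm.
  - destruct (vdist_att x y) as [k1 [Hk1 E1]]. rewrite <- E1, <- (wdist_inv G A pi hgen k).
    rewrite gmulA. apply vdist_le. apply Hmul; auto.
  - destruct (vdist_att (gmul k x) y) as [k1 [Hk1 E1]]. rewrite <- E1, <- (wdist_inv G A pi hgen (ginv k)).
    rewrite !gmulA, gmulV, gmul1. apply vdist_le. apply Hmul; auto. apply Hinv; auto.
Qed.

Lemma vdist_Hr (k x y : G) : H k -> vdistY pi H x (gmul k y) = vdistY pi H x y.
Proof. intro Hk. rewrite vdist_sym, vdist_Hl, vdist_sym; auto. Qed.

Lemma vdist_coset (x y : G) : same_coset H x y -> vdistY pi H x y = 0%nat.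
Proof.
  intro S. assert (E := vdist_le x y _ S). rewrite <- gmulA, gmulV, gmul1r, (wdist_refl G A pi hgen) in E. lia.
Qed.

Lemma vdist_edge (g : G) (a : A) : (vdistY pi H g (gmul g (pi a)) <= 1)%nat.
Proof.
  eapply Nat.le_trans. apply vdist_le_w. apply (wdist_le G A pi hgen _ _ ((a,true)::nil)).
  simpl. unfold letter_val; simpl. rewrite gmul1r. reflexivity.
Qed.
End V.

Section Y.
Variables (G : Group) (A : Type) (pi : A -> G) (H : G -> Prop).
Hypothesis hgen : generates pi.
Hypothesis hH : is_subgroup G H.

Definition cellv (p : YPt G A) : G := match p with YV g => g | YE g _ _ => g end.

Definition EP (p : YPt G A) (e : G * R) : Prop :=
  0 <= snd e <= 1 /\ (vdistY pi H (cellv p) (fst e) <= 1)%nat /\ (vdistY pi H (fst e) (cellv p) <= 1)%nat.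

Lemma ends_EP (p : YPt G A) : EP p (fst (ends pi p)) /\ EP p (snd (ends pi p)).
Proof.
  unfold EP. destruct p as [g|g a [t Ht]]; simpl.
  - rewrite (vdist_coset G A pi H hgen hH g g). 2:{ unfold same_coset. rewrite gmulrV. apply H1; auto. }
    repeat split; try lra; lia.
  - rewrite (vdist_coset G A pi H hgen hH g g). 2:{ unfold same_coset. rewrite gmulrV. apply H1; auto. }
    assert (E1 := vdist_edge G A pi H hgen hH g a).
    rewrite (vdist_sym G A pi H hgen hH) in E1 at 1.
    assert (E2 := vdist_edge G A pi H hgen hH g a).
    repeat split; try lra; lia.
Qed.

Lemma vr_eq (p q : YPt G A) : vertex_route pi H p q =
  Rmin (Rmin (route pi H (fst (ends pi p)) (fst (ends pi q))) (route pi H (fst (ends pi p)) (snd (ends pi q))))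
       (Rmin (route pi H (snd (ends pi p)) (fst (ends pi q))) (route pi H (snd (ends pi p)) (snd (ends pi q)))).
Proof. unfold vertex_route. destruct (ends pi p), (ends pi q). reflexivity. Qed.

Lemma route_low (p q : YPt G A) (e f : G * R) : EP p e -> EP q f ->
  INR (vdistY pi H (cellv p) (cellv q)) - 2 <= route pi H e f /\ 0 <= route pi H e f.
Proof.
  intros [He1 [He2 He3]] [Hf1 [Hf2 Hf3]]. unfold route.
  assert (U1: (vdistY pi H (cellv p) (cellv q) <= 2 + vdistY pi H (fst e) (fst f))%nat).
  { assert (T5 := vdist_tri G A pi H hgen hH (cellv p) (fst e) (fst f)).
    assert (T6 := vdist_tri G A pi H hgen hH (cellv p) (fst f) (cellv q)).
    assert (T7 := vdist_tri G A pi H hgen hH (cellv p) (fst e) (cellv q)). lia. }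
  apply le_INR in U1. rewrite plus_INR in U1. simpl in U1.
  assert (P := pos_INR (vdistY pi H (fst e) (fst f))).
  split; lra.
Qed.

Lemma cellv_fst (p : YPt G A) : fst (fst (ends pi p)) = cellv p.
Proof. destruct p; reflexivity. Qed.

Lemma dY_le_vr (p q : YPt G A) : dY pi H p q <= vertex_route pi H p q.
Proof. unfold dY. destruct (excluded_middle_informative _); [apply Rmin_l | lra]. Qed.

Lemma dY_up (p q : YPt G A) : dY pi H p q <= INR (vdistY pi H (cellv p) (cellv q)) + 2.
Proof.
  eapply Rle_trans. apply dY_le_vr. rewrite vr_eq.
  eapply Rle_trans. apply Rmin_l. eapply Rle_trans. apply Rmin_l.
  destruct (ends_EP p) as [[[E1 E1'] _] _]. destruct (ends_EP q) as [[[F1 F1'] _] _].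
  unfold route. rewrite !cellv_fst. lra.
Qed.

Lemma vr_low (p q : YPt G A) : INR (vdistY pi H (cellv p) (cellv q)) - 2 <= vertex_route pi H p q
  /\ 0 <= vertex_route pi H p q.
Proof.
  rewrite vr_eq. destruct (ends_EP p) as [E1 E2]. destruct (ends_EP q) as [F1 F2].
  destruct (route_low _ _ _ _ E1 F1). destruct (route_low _ _ _ _ E1 F2).
  destruct (route_low _ _ _ _ E2 F1). destruct (route_low _ _ _ _ E2 F2).
  split; repeat apply Rmin_glb; lra.
Qed.

Lemma dY_low (p q : YPt G A) : INR (vdistY pi H (cellv p) (cellv q)) <= dY pi H p q + 2 /\ 0 <= dY pi H p q.
Proof.
  destruct (vr_low p q) as [L1 L2]. unfold dY. destruct (excluded_middle_informative _) as [S|S].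
  - assert (R0 := Rabs_pos (param p - param q)).
    assert (M0 : 0 <= Rmin (vertex_route pi H p q) (Rabs (param p - param q))) by (apply Rmin_glb; lra).
    split; auto.
    destruct p as [g|g a t]; destruct q as [g'|g' a' t']; simpl in S; try tauto.
    destruct S as [_ S]. simpl cellv. rewrite (vdist_coset G A pi H hgen hH g g' S). rewrite INR_0. lra.
  - lra.
Qed.
End Y.

Section Core.
Variables (T : Type) (d : T -> T -> R) (delta : R).
Definition gp (x y w : T) := (d x w + d y w - d x y) / 2.
Hypothesis dsym : forall x y, d x y = d y x.
Hypothesis dtri : forall x y z, d x z <= d x y + d y z.
Hypothesis fpo : forall x y z w, gp x y w + delta >= gp x z w \/ gp x y w + delta >= gp z y w.
Hypothesis dpos : 0 <= delta.

Lemma core (x y y' a b m m' n : T) (c K1 : R) :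
  0 <= c -> 0 <= K1 ->
  d b y' = d a y ->
  d y b >= d a y + d a b - 2*K1 ->
  d y' a >= d a y + d a b - 2*K1 ->
  d x m + d m y <= d x y + c ->
  d x m' + d m' y' <= d x y' + c ->
  -c <= d x m - d x m' <= c ->
  -c <= d x y - d x y' <= c ->
  d n y = d m' y' -> d n a = d m' b ->
  d m m' <= 100*(c+K1+delta) \/ d m n <= 100*(c+K1+delta) \/
  (gp a b m <= 100*(c+K1+delta) /\ gp a b m' <= 100*(c+K1+delta)).
Proof.
  intros c0 K0 Eb HA HB H1 H2 H3 H4 En1 En2.
  assert (t1 := dtri x m y). assert (t2 := dtri x m' y').
  assert (s1 := dsym x m). assert (s2 := dsym x m'). assert (s3 := dsym m y).
  assert (s4 := dsym m' y'). assert (s5 := dsym x y). assert (s6 := dsym x y').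
  assert (s7 := dsym y y'). assert (s8 := dsym a y). assert (s9 := dsym b y').
  assert (s10 := dsym a b). assert (s11 := dsym y b). assert (s12 := dsym y' a).
  assert (s13 := dsym m m'). assert (s14 := dsym m n). assert (s15 := dsym n y). assert (s16 := dsym n a).
  assert (s17 := dsym m a). assert (s18 := dsym m b). assert (s19 := dsym m' a). assert (s20 := dsym m' b).
  destruct (Rle_dec (d x m) (gp y y' x + 4*c)) as [CI|CII].
  - left. destruct (fpo m m' y x) as [F1|F1]; destruct (fpo y m' y' x) as [F2|F2];
    unfold gp in *; lra.
  - right.
    assert (Fa : forall L, L <= d a y -> L <= gp x y' y - c/2 -> gp x a y >= L - K1 - 2*delta).
    { intros L HL1 HL2. assert (C1 : gp y' a y >= L - K1 - delta).
      { destruct (fpo y b y' a) as [F|F]; unfold gp in *; 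
        assert (u1 := dtri y' b a); assert (u2 := dtri y y' b); lra. }
      destruct (fpo x a y' y) as [F|F]; unfold gp in *; lra. }
    assert (Fb : forall L, L <= d a y -> L <= gp x y y' - c/2 -> gp x b y' >= L - K1 - 2*delta).
    { intros L HL1 HL2. assert (C1 : gp y b y' >= L - K1 - delta).
      { destruct (fpo y' a y b) as [F|F]; unfold gp in *;
        assert (u1 := dtri y a b); assert (u2 := dtri y' y a); lra. }
      destruct (fpo x b y y') as [F|F]; unfold gp in *; lra. }
    destruct (Rle_dec (d m y) (d a y + 4*c)) as [CA|CB].
    + left.
      assert (G1 : gp m a y >= d m y - 4*c - K1 - 3*delta).
      { assert (Q := Fa (d m y - 4*c) ltac:(lra) ltac:(unfold gp in *; lra)).
        destruct (fpo m a x y) as [F|F]; unfold gp in *; lra. }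
      assert (G2 : gp m' b y' >= d m' y' - 7*c - K1 - 3*delta).
      { assert (Q := Fb (d m' y' - 7*c) ltac:(unfold gp in *; lra) ltac:(unfold gp in *; lra)).
        destruct (fpo m' b x y') as [F|F]; unfold gp in *; lra. }
      destruct (fpo m n a y) as [F|F]; unfold gp in *; lra.
    + right.
      assert (G1 : gp m a y >= d a y - K1 - 3*delta).
      { assert (Q := Fa (d a y) ltac:(lra) ltac:(unfold gp in *; lra)).
        destruct (fpo m a x y) as [F|F]; unfold gp in *; lra. }
      assert (G2 : gp m b y >= d m y - c/2 - 2*delta).
      { assert (u1 := dtri y b y').
        assert (Q : gp x b y >= d m y - delta).
        { destruct (fpo x b y' y) as [F|F]; unfold gp in *; lra. }
        destruct (fpo m b x y) as [F|F]; unfold gp in *; lra. }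
      assert (G3 : gp m' b y' >= d a y - K1 - 3*delta).
      { assert (Q := Fb (d a y) ltac:(lra) ltac:(unfold gp in *; lra)).
        destruct (fpo m' b x y') as [F|F]; unfold gp in *; lra. }
      assert (G4 : gp m' a y' >= d m' y' - c/2 - 2*delta).
      { assert (u1 := dtri y' a y).
        assert (Q : gp x a y' >= d m' y' - delta).
        { destruct (fpo x a y y') as [F|F]; unfold gp in *; lra. }
        destruct (fpo m' a x y') as [F|F]; unfold gp in *; lra. }
      assert (u1 := dtri y a b). assert (u2 := dtri y' b a).
      unfold gp in *; split; lra.
Qed.
End Core.

Lemma nat_floor (N : nat) (u : R) : 0 <= u <= INR N -> exists i, (i <= N)%nat /\ INR i <= u < INR i + 1.
Proof.
  induction N as [|N IH]; intros [U1 U2].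
  - exists 0%nat. simpl in *. split; [lia|lra].
  - rewrite S_INR in U2. destruct (Rle_dec u (INR N)) as [L|L].
    + destruct (IH (conj U1 L)) as [i [Hi Hu]]. exists i. split; [lia|lra].
    + destruct (Req_dec u (INR N + 1)) as [E|E].
      * exists (S N). rewrite S_INR. split; [lia|lra].
      * exists N. split; [lia|lra].
Qed.

Section Hyp.
Variables (G : Group) (A : Type) (pi : A -> G) (H : G -> Prop).
Hypothesis hgen : generates pi.
Hypothesis hH : is_subgroup G H.

Definition dd (x y : G) : R := INR (wdist pi x y).

Lemma dd_sym x y : dd x y = dd y x.
Proof. unfold dd. rewrite (wdist_sym G A pi hgen). reflexivity. Qed.
Lemma dd_tri x y z : dd x z <= dd x y + dd y z.
Proof. unfold dd. rewrite <- plus_INR. apply le_INR. apply (wdist_tri G A pi hgen). Qed.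
Lemma dd_inv k x y : dd (gmul k x) (gmul k y) = dd x y.
Proof. unfold dd. rewrite (wdist_inv G A pi hgen). reflexivity. Qed.
Lemma dd_pos x y : 0 <= dd x y.
Proof. apply pos_INR. Qed.

Lemma fpo_of (delta : R) :
  (forall x y z w : G, gromov_prod pi x y w >= Rmin (gromov_prod pi x z w) (gromov_prod pi z y w) - delta) ->
  forall x y z w, gp G dd x y w + Rmax delta 0 >= gp G dd x z w \/ gp G dd x y w + Rmax delta 0 >= gp G dd z y w.
Proof.
  intros F x y z w. specialize (F x y z w). unfold gp, dd.
  assert (M := Rmax_l delta 0).
  destruct (Rle_dec (gromov_prod pi x z w) (gromov_prod pi z y w)) as [L|L].
  - rewrite Rmin_left in F by lra. left. unfold gromov_prod in F. lra.
  - rewrite Rmin_right in F by lra. right. unfold gromov_prod in F. lra.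
Qed.

Variable delta : R.
Hypothesis fpo : forall x y z w, gp G dd x y w + delta >= gp G dd x z w \/ gp G dd x y w + delta >= gp G dd z y w.
Variable C : R.
Hypothesis hqc : forall (h1 h2 : G) (w : word A), H h1 -> H h2 ->
      gmul h1 (eval pi w) = h2 -> length w = wdist pi h1 h2 ->
      forall i : nat, (i <= length w)%nat ->
        exists h : G, H h /\ INR (wdist pi (gmul h1 (eval pi (firstn i w))) h) <= C.

Lemma qc_lemma (a b z : G) : H a -> H b ->
  exists k, H k /\ dd z k <= dd a z - gp G dd z b a + 1 + 2*delta + C.
Proof.
  intros Ha Hb.
  destruct (wdist_spec G A pi hgen a b) as [w [Lw Ew]].
  assert (t1 := dd_tri z a b). assert (t2 := dd_tri z b a).
  assert (s1 := dd_sym z a). assert (s2 := dd_sym a b). assert (s3 := dd_sym z b).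
  destruct (nat_floor (length w) (gp G dd z b a)) as [i [Hi Hu]].
  { rewrite Lw. change (INR (wdist pi a b)) with (dd a b). unfold gp; lra. }
  destruct (hqc a b w Ha Hb Ew Lw i Hi) as [k [Hk Dk]].
  destruct (geod_prefix G A pi hgen a b w i Lw Ew Hi) as [P1 P2].
  set (zi := gmul a (eval pi (firstn i w))) in *.
  exists k. split; auto.
  assert (E1 : dd a zi = INR i) by (unfold dd; rewrite P1; auto).
  assert (E2 : dd zi b = dd a b - INR i) by (unfold dd; rewrite P2, minus_INR, Lw; auto).
  assert (t3 := dd_tri z zi k). assert (s4 := dd_sym a zi). assert (s5 := dd_sym zi b).
  fold (dd zi k) in Dk.
  destruct (fpo z zi b a) as [F|F]; unfold gp in *; lra.
Qed.

Lemma nearest (z : G) : exists p, H p /\ forall k, H k -> dd p z <= dd k z.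
Proof.
  destruct (least_ex (fun n => exists k, H k /\ wdist pi k z = n)) as [n [[p [Hp E]] M]].
  { exists (wdist pi gone z). exists gone. split; auto. apply H1; auto. }
  exists p. split; auto. intros k Hk. unfold dd. apply le_INR. rewrite E. apply M. exists k; auto.
Qed.
End Hyp.

Section VL.
Variables (G : Group) (A : Type) (pi : A -> G) (H : G -> Prop).
Hypothesis hgen : generates pi.
Hypothesis hH : is_subgroup G H.
Variable delta : R.
Hypothesis fpo : forall x y z w, gp G (dd G A pi) x y w + delta >= gp G (dd G A pi) x z w \/ gp G (dd G A pi) x y w + delta >= gp G (dd G A pi) z y w.
Hypothesis dpos : 0 <= delta.
Variable C : R.
Hypothesis Cpos : 0 < C.
Hypothesis hqc : forall (h1 h2 : G) (w : word A), H h1 -> H h2 ->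
      gmul h1 (eval pi w) = h2 -> length w = wdist pi h1 h2 ->
      forall i : nat, (i <= length w)%nat ->
        exists h : G, H h /\ INR (wdist pi (gmul h1 (eval pi (firstn i w))) h) <= C.

Notation d := (dd G A pi).
Notation vd := (fun x y => INR (vdistY pi H x y)).

Lemma vd_le_d x y : vd x y <= d x y.
Proof. apply le_INR. apply vdist_le_w; auto. Qed.
Lemma vd_sym x y : vd x y = vd y x.
Proof. simpl. rewrite (vdist_sym G A pi H hgen hH). auto. Qed.
Lemma vd_tri x y z : vd x z <= vd x y + vd y z.
Proof. simpl. rewrite <- plus_INR. apply le_INR. apply vdist_tri; auto. Qed.
Lemma vd_Hl k x y : H k -> vd (gmul k x) y = vd x y.
Proof. intro. simpl. rewrite vdist_Hl; auto. Qed.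
Lemma vd_Hr k x y : H k -> vd x (gmul k y) = vd x y.
Proof. intro. simpl. rewrite vdist_Hr; auto. Qed.
Lemma vd_att x y : exists k, H k /\ d x (gmul k y) = vd x y.
Proof. destruct (vdist_att G A pi H hgen hH x y) as [k [Hk E]]. exists k. split; auto. unfold dd. rewrite E. auto. Qed.
Lemma vd_le k x y : H k -> vd x y <= d x (gmul k y).
Proof. intro. apply le_INR. apply vdist_le; auto. Qed.

Definition K1 := 1 + 2*delta + C.
Definition Kc := 100*(30 + K1 + delta).
Definition VV := Kc + 2*(Kc + K1).

Lemma near_H (p b z : G) : H p -> H b -> (forall k, H k -> d p z <= d k z) ->
  d z b >= d p z + d p b - 2*K1.
Proof.
  intros Hp Hb N. destruct (qc_lemma G A pi H hgen delta fpo C hqc p b z Hp Hb) as [k [Hk Dk]].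
  assert (N1 := N k Hk). assert (s1 := dd_sym G A pi hgen k z). assert (s2 := dd_sym G A pi hgen p z).
  assert (s3 := dd_sym G A pi hgen b p). assert (s4 := dd_sym G A pi hgen z b).
  unfold gp, K1 in *. lra.
Qed.

Lemma close_H (p b z : G) : H p -> H b -> gp G d p b z <= Kc -> exists k, H k /\ d z k <= Kc + K1.
Proof.
  intros Hp Hb Hg. destruct (qc_lemma G A pi H hgen delta fpo C hqc p b z Hp Hb) as [k [Hk Dk]].
  exists k. split; auto.
  assert (s1 := dd_sym G A pi hgen p z). assert (s2 := dd_sym G A pi hgen b z).
  assert (s3 := dd_sym G A pi hgen b p).
  unfold gp, K1 in *. lra.
Qed.

Lemma vertex_lemma (a m e a' m' e' : G) (s t L M : R) :
  0 <= s -> 0 <= t -> t <= M -> s <= L -> (t = s \/ (t = M /\ M <= s)) ->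
  vd a m <= s + 2 -> vd m e <= L - s + 2 -> vd a e >= L - 2 ->
  vd a' m' <= t + 2 -> vd m' e' <= M - t + 2 -> vd a' e' <= M + 2 -> vd a' e' >= M - 2 ->
  vd a a' <= 2 -> vd e e' <= 2 ->
  vd m m' <= VV.
Proof.
  intros s0 t0 tM sL Ht Ham Hme Hae Ham' Hme' Hae' Hae'' Haa Hee.
  assert (LM : L <= M + 8).
  { assert (u1 := vd_tri a a' e). assert (u2 := vd_tri a' e' e). assert (u3 := vd_sym e e'). lra. }
  assert (ML : M <= L + 10).
  { assert (u1 := vd_tri a' a e'). assert (u2 := vd_tri a e e'). assert (u3 := vd_sym a a'). 
    assert (u4 : vd a e <= L + 4).
    { assert (u5 := vd_tri a m e). lra. }
    lra. }
  destruct (vd_att m a) as [kA [HkA EA]]. set (XA := gmul kA a) in *.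
  destruct (vd_att m e) as [kE [HkE EE]]. set (Y := gmul kE e) in *.
  destruct (vd_att m' a') as [kA' [HkA' EA']]. set (XA' := gmul kA' a') in *.
  destruct (vd_att m' e') as [kE' [HkE' EE']]. set (Y' := gmul kE' e') in *.
  assert (DAE : vd a e <= d XA Y).
  { assert (E1 : vd a e = vd XA Y) by (unfold XA, Y; rewrite vd_Hl, vd_Hr; auto).
    rewrite E1. apply vd_le_d. }
  destruct (vd_att XA XA') as [k0 [Hk0 E0]].
  assert (E0' : vd XA XA' = vd a a') by (unfold XA, XA'; rewrite vd_Hl, vd_Hr; auto).
  set (A2 := gmul k0 XA') in *. set (m2 := gmul k0 m') in *. set (Y2 := gmul k0 Y') in *.
  assert (F1 : d A2 m2 = d XA' m') by (apply dd_inv; auto).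
  assert (F2 : d m2 Y2 = d m' Y') by (apply dd_inv; auto).
  destruct (vd_att Y2 Y) as [k1 [Hk1 E1]].
  assert (E1' : vd Y2 Y = vd e' e) by (unfold Y2, Y', Y; rewrite vd_Hl, vd_Hl, vd_Hr; auto).
  set (Y3 := gmul k1 Y) in *.
  assert (Dmin : vd a e <= d XA Y3).
  { assert (E2 : vd a e = vd XA Y) by (unfold XA, Y; rewrite vd_Hl, vd_Hr; auto).
    rewrite E2. apply vd_le; auto. }
  destruct (nearest G A pi H hH Y) as [p [Hp Np]].
  set (b := gmul k1 p).
  assert (Hb : H b) by (apply Hmul; auto).
  assert (HA := near_H p b Y Hp Hb Np).
  assert (Np' : forall k, H k -> d b Y3 <= d k Y3).
  { intros k Hk. unfold b, Y3. rewrite dd_inv; auto.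
    assert (E : k = gmul k1 (gmul (ginv k1) k)) by (rewrite gmulA, gmulrV, gmul1; auto).
    rewrite E. rewrite dd_inv; auto. apply Np. apply Hmul; auto. apply Hinv; auto. }
  assert (HB := near_H b p Y3 Hb Hp Np').
  assert (Eb : d b Y3 = d p Y) by (unfold b, Y3; apply dd_inv; auto).
  set (n := gmul (ginv k1) m2).
  assert (En1 : d n Y = d m2 Y3).
  { unfold Y3. rewrite <- (dd_inv G A pi hgen k1). unfold n. rewrite gmulA, gmulrV, gmul1. auto. }
  assert (En2 : d n p = d m2 b).
  { unfold b. rewrite <- (dd_inv G A pi hgen k1). unfold n. rewrite gmulA, gmulrV, gmul1. auto. }
  assert (vsym := vd_sym).
  assert (dsym := dd_sym G A pi hgen). assert (dtri := dd_tri G A pi hgen).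
  assert (Q1 : d XA m + d m Y <= d XA Y + 30).
  { rewrite (dsym XA m). rewrite EA, EE. rewrite (vsym m a). lra. }
  assert (Q2 : d XA m2 + d m2 Y3 <= d XA Y3 + 30).
  { assert (u1 := dtri XA A2 m2). assert (u2 := dtri m2 Y2 Y3).
    rewrite F1 in u1. rewrite F2 in u2. rewrite (dsym XA' m'), EA', EE' in *. rewrite (vsym m' a') in u1.
    assert (u3 : d Y2 Y3 <= 2) by (rewrite E1, E1', vsym; auto).
    assert (u4 : d XA A2 <= 2) by (rewrite E0, E0'; auto).
    lra. }
  assert (Q3 : -30 <= d XA m - d XA m2 <= 30).
  { assert (u1 := dtri XA A2 m2). assert (u2 := dtri m2 Y2 Y3).
    rewrite F1 in u1. rewrite F2 in u2. rewrite (dsym XA' m'), EA', EE' in *. rewrite (vsym m' a') in u1.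
    assert (u3 : d Y2 Y3 <= 2) by (rewrite E1, E1', vsym; auto).
    assert (u4 : d XA A2 <= 2) by (rewrite E0, E0'; auto).
    assert (u5 := dtri XA m2 Y3). assert (u6 := dtri XA m Y).
    rewrite (dsym XA m), EA, EE in *. rewrite (vsym m a) in *. lra. }
  assert (Q4 : -30 <= d XA Y - d XA Y3 <= 30).
  { assert (u1 := dtri XA A2 m2). assert (u2 := dtri m2 Y2 Y3).
    rewrite F1 in u1. rewrite F2 in u2. rewrite (dsym XA' m'), EA', EE' in *. rewrite (vsym m' a') in u1.
    assert (u3 : d Y2 Y3 <= 2) by (rewrite E1, E1', vsym; auto).
    assert (u4 : d XA A2 <= 2) by (rewrite E0, E0'; auto).
    assert (u5 := dtri XA m2 Y3). assert (u6 := dtri XA m Y).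
    rewrite (dsym XA m), EA, EE in *. rewrite (vsym m a) in *. lra. }
  assert (K1pos : 0 <= K1) by (unfold K1; lra).
  rewrite Eb, (dsym b p) in HB.
  destruct (core G d delta dsym dtri fpo dpos XA Y Y3 p b m m2 n 30 K1 ltac:(lra) K1pos
     Eb HA HB Q1 Q2 Q3 Q4 En1 En2) as [R|[R|[R1 R2]]];
  fold Kc in *; fold K1 in *.
  - assert (E : vd m m' = vd m m2) by (unfold m2; rewrite vd_Hr; auto).
    rewrite E. assert (u := vd_le_d m m2). unfold VV. assert (0 <= Kc) by (unfold Kc; lra). lra.
  - assert (E : vd m m' = vd m n) by (unfold n, m2; rewrite vd_Hr, vd_Hr; auto; apply Hinv; auto).
    rewrite E. assert (u := vd_le_d m n). unfold VV. assert (0 <= Kc) by (unfold Kc; lra). lra.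
  - destruct (close_H p b m Hp Hb R1) as [k [Hk Dk]].
    destruct (close_H p b m2 Hp Hb R2) as [k' [Hk' Dk']].
    assert (E : vd m m' = vd m m2) by (unfold m2; rewrite vd_Hr; auto).
    rewrite E. assert (u1 := vd_tri m k m2). assert (u2 := vd_tri k k' m2).
    assert (u3 : vd k k' = 0).
    { simpl. rewrite (vdist_coset G A pi H hgen hH). auto. unfold same_coset. apply Hmul; auto. apply Hinv; auto. }
    assert (u4 := vd_le_d m k). assert (u5 := vd_le_d k' m2). rewrite (dsym k' m2) in u5.
    unfold VV. assert (0 <= Kc) by (unfold Kc; lra). cbv beta in *. lra.
Qed.
End VL.

Theorem theorem3p4 (G : Group) (A : Type) (pi : A -> G) (H : G -> Prop)
  (hA : finite_type A) (hgen : generates pi)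
  (hhyp : word_hyperbolic pi)
  (hH : is_subgroup G H) (hqc : quasiconvex pi H) :
  exists delta' : R, 0 <= delta' /\
    forall (alpha beta : R -> YPt G A) (L M : R),
      geodesic_segment pi H alpha L -> geodesic_segment pi H beta M ->
      dY pi H (alpha 0) (beta 0) = 0 -> dY pi H (alpha L) (beta M) = 0 ->
      in_nbhd pi H delta' alpha L beta M /\ in_nbhd pi H delta' beta M alpha L.
Proof.
  destruct hhyp as [d0 F].
  assert (fpo := fpo_of G A pi d0 F).
  assert (dpos : 0 <= Rmax d0 0) by apply Rmax_r.
  destruct hqc as [C [Cpos QC]].
  exists (VV (Rmax d0 0) C + 2). split.
  { unfold VV, Kc, K1. lra. }
  assert (half : forall (alpha beta : R -> YPt G A) (L M : R),
      geodesic_segment pi H alpha L -> geodesic_segment pi H beta M ->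
      INR (vdistY pi H (cellv G A (alpha 0)) (cellv G A (beta 0))) <= 2 ->
      INR (vdistY pi H (cellv G A (alpha L)) (cellv G A (beta M))) <= 2 ->
      in_nbhd pi H (VV (Rmax d0 0) C + 2) alpha L beta M).
  { intros alpha beta L M [L0 Ga] [M0 Gb] E0 EL s Hs.
    exists (Rmin s M). assert (T1 := Rmin_l s M). assert (T2 := Rmin_r s M).
    assert (T3 : 0 <= Rmin s M) by (apply Rmin_glb; lra).
    split; [lra|].
    set (t := Rmin s M) in *.
    assert (Ht : t = s \/ (t = M /\ M <= s)).
    { unfold t. destruct (Rle_dec s M). left. apply Rmin_left; auto. right. split. apply Rmin_right; lra. lra. }
    assert (Z : forall r, 0 <= r -> Rabs (0 - r) = r) by (intros; rewrite Rabs_minus_sym, Rminus_0_r, Rabs_pos_eq; auto).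
    assert (Z2 : forall r r', r <= r' -> Rabs (r - r') = r' - r) by (intros; rewrite Rabs_minus_sym, Rabs_pos_eq; lra).
    assert (g1 := Ga 0 s ltac:(lra) Hs). rewrite Z in g1 by lra.
    assert (g2 := Ga s L Hs ltac:(lra)). rewrite Z2 in g2 by lra.
    assert (g3 := Ga 0 L ltac:(lra) ltac:(lra)). rewrite Z in g3 by lra.
    assert (h1 := Gb 0 t ltac:(lra) ltac:(lra)). rewrite Z in h1 by lra.
    assert (h2 := Gb t M ltac:(lra) ltac:(lra)). rewrite Z2 in h2 by lra.
    assert (h3 := Gb 0 M ltac:(lra) ltac:(lra)). rewrite Z in h3 by lra.
    assert (V := vertex_lemma G A pi H hgen hH (Rmax d0 0) fpo dpos C Cpos QC
      (cellv G A (alpha 0)) (cellv G A (alpha s)) (cellv G A (alpha L))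
      (cellv G A (beta 0)) (cellv G A (beta t)) (cellv G A (beta M)) s t L M).
    destruct (dY_low G A pi H hgen hH (alpha 0) (alpha s)) as [a1 _].
    destruct (dY_low G A pi H hgen hH (alpha s) (alpha L)) as [a2 _].
    assert (a3 := dY_up G A pi H hgen hH (alpha 0) (alpha L)).
    destruct (dY_low G A pi H hgen hH (beta 0) (beta t)) as [b1 _].
    destruct (dY_low G A pi H hgen hH (beta t) (beta M)) as [b2 _].
    assert (b3 := dY_up G A pi H hgen hH (beta 0) (beta M)).
    destruct (dY_low G A pi H hgen hH (beta 0) (beta M)) as [b4 _].
    assert (U := dY_up G A pi H hgen hH (alpha s) (beta t)).
    cbv beta in V.
    assert (W := V ltac:(lra) ltac:(lra) ltac:(lra) ltac:(lra) Ht ltac:(lra) ltac:(lra) ltac:(lra)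
      ltac:(lra) ltac:(lra) ltac:(lra) ltac:(lra) E0 EL).
    lra. }
  intros alpha beta L M Ga Gb E0 EL.
  destruct (dY_low G A pi H hgen hH (alpha 0) (beta 0)) as [c1 _].
  destruct (dY_low G A pi H hgen hH (alpha L) (beta M)) as [c2 _].
  split; apply half; auto; try lra.
  - rewrite (vdist_sym G A pi H hgen hH). lra.
  - rewrite (vdist_sym G A pi H hgen hH). lra.
Qed.
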